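(* For every $n \in \mathbb{N}$, the SquaredEquality formula $EQ^2(n)$ has a QRAT refutation of size $\mathcal{O}(n^2)$.
   Context: A QBF is in closed prenex CNF form $Q.\phi$, where $Q = Q_1X_1\dots Q_kX_k$ is a quantifier prefix with $Q_i\in\{\exists,\forall\}$ and $\phi$ is a CNF (a set of clauses, each a disjunction of literals). For literals $\ell,k$, write $k \le_Q \ell$ if the variable of $k$ is quantified in a block at or to the left of the block of $\ell$. The $n$-th SquaredEquality formula is $EQ^2(n) := Q(n).eq^2(n)$ with prefix $Q(n) := \exists\{x_1,y_1,\dots,x_n,y_n\}\,\forall\{u_1,v_1,\dots,u_n,v_n\}\,\exists\{t_{i,j} : i,j\in[n]\}$ and matrix $eq^2(n)$ consisting of the clauses $\{x_i,y_j,u_i,v_j,t_{i,j}\}$, $\{x_i,\overline{y_j},u_i,\overline{v_j},t_{i,j}\}$, $\{\overline{x_i},y_j,\overline{u_i},v_j,t_{i,j}\}$, $\{\overline{x_i},\overline{y_j},\overline{u_i},\overline{v_j},t_{i,j}\}$ for all $i,j\in[n]$, together with the single clause $(\overline{t_{i,j}} : i,j\in[n])$ (the disjunction of all $\overline{t_{i,j}}$). QRAT proof system. Unit propagation on a CNF $F$: repeatedly, for a unit clause $(\ell)$, remove all clauses containing $\ell$ and delete $\overline{\ell}$ from all clauses, until no unit clause remains or the empty clause is derived. A clause $C$ is an asymmetric tautology (AT) w.r.t. $\phi$ (and w.r.t. $Q.\phi$) if unit propagation on $\phi \wedge \overline{C}$ (where $\overline{C}$ is the conjunction of the negations of the literals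 of $C$) derives the empty clause. For clauses $C\vee\ell$ and $D\vee\overline{\ell}$, the outer resolvent is $OR(Q,C,D,\ell) := C \cup \{k \in D : k \le_Q \ell\}$. A clause $C\vee \ell$ is a QRAT-clause on literal $\ell$ (and $\ell$ is a QRAT-literal in it) w.r.t. $Q.\phi$ if for every clause $D\vee\overline{\ell}\in\phi$ the outer resolvent $OR(Q,C,D,\ell)$ is an AT w.r.t. $\phi$. Extended inner clause $EIC(Q,C,\ell)$ for a universal $\ell\in C\in\phi$: repeatedly, for every existential literal $k$ of the current clause quantified to the right of $\ell$, add to the clause all literals quantified to the right of $\ell$ (and $\overline{\ell}$ if present) occurring in clauses $D\in\phi$ with $\overline{k}\in D$. A QRAT derivation from $Q.\phi$ is a sequence of modifications of the current formula, each being one of: adding a clause that is an AT or has an existential QRAT-literal w.r.t. the current formula (QRATA); deleting any clause; deleting a universal literal $\ell$ from a clause $C$ when $\ell$ is a QRAT-literal in $C$ (QRATU); deleting a universal literal $\ell$ from a clause $C$ when $\overline{\ell}\notin EIC(Q,C,\ell)$ (EUR). A QRAT refutation is such a derivation that produces the empty clause $\bot$; its size is the number of steps (equivalently, total size of the clauses produced). *)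

(* Defs.v *)
From mathcomp Require Import all_boot.
Set Implicit Arguments. Unset Strict Implicit. Unset Printing Implicit Defensive.

Section QRAT.
Variable V : eqType.

(* A literal is a variable together with a polarity (true = positive). *)
Definition lit := (V * bool)%type.
Definition lvar (l : lit) : V := l.1.
Definition negl (l : lit) : lit := (l.1, ~~ l.2).
Definition clause := seq lit.
Definition cnf := seq clause.

(* A quantifier prefix: a list of blocks (Q_i, X_i), with Q_i = true for
   an existential block and false for a universal block; leftmost first. *)
Definition prefix := seq (bool * seq V).

Definition level (Q : prefix) (v : V) : nat := find (fun b => v \in b.2) Q.
Definition bound (Q : prefix) (v : V) : bool := level Q v < size Q.
Definition is_exist (Q : prefix) (v : V) : bool :=
  bound Q v && (nth (false, [::]) Q (level Q v)).1.
Definition is_univ (Q : prefix) (v : V) : bool :=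
  bound Q v && ~~ (nth (false, [::]) Q (level Q v)).1.

Definition leQ (Q : prefix) (k l : lit) : bool :=
  [&& bound Q (lvar k), bound Q (lvar l) & level Q (lvar k) <= level Q (lvar l)].
Definition rightQ (Q : prefix) (k l : lit) : bool :=
  [&& bound Q (lvar k), bound Q (lvar l) & level Q (lvar l) < level Q (lvar k)].

Definition simplify (F : cnf) (l : lit) : cnf :=
  [seq [seq m <- C | m != negl l] | C <- F & l \notin C].

Inductive up_conflict : cnf -> Prop :=
| up_empty F : [::] \in F -> up_conflict F
| up_unit F l : [:: l] \in F -> up_conflict (simplify F l) -> up_conflict F.

Definition AT (F : cnf) (C : clause) : Prop :=
  up_conflict ([seq [:: negl m] | m <- C] ++ F).

(* Outer resolvent of (C \/ l) (given as the full clause E) and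
   (D \/ ~l) (given as the full clause G) on l. *)
Definition outer_resolvent (Q : prefix) (E G : clause) (l : lit) : clause :=
  [seq m <- E | m != l] ++ [seq k <- G | (k != negl l) && leQ Q k l].

Definition QRAT_lit (Q : prefix) (F : cnf) (E : clause) (l : lit) : Prop :=
  l \in E /\
  forall G, G \in F -> negl l \in G -> AT F (outer_resolvent Q E G l).

Inductive in_EIC (Q : prefix) (F : cnf) (E : clause) (l : lit) : lit -> Prop :=
| EIC_base m : m \in E -> in_EIC Q F E l m
| EIC_step k G m : in_EIC Q F E l k -> is_exist Q (lvar k) -> rightQ Q k l ->
    G \in F -> negl k \in G -> m \in G -> rightQ Q m l || (m == negl l) ->
    in_EIC Q F E l m.

Inductive qrat_step (Q : prefix) : cnf -> cnf -> Prop :=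
| step_ATA F C : AT F C -> qrat_step Q F (C :: F)
| step_QRATA F C l : is_exist Q (lvar l) -> QRAT_lit Q F C l ->
    qrat_step Q F (C :: F)
| step_del F1 C F2 : qrat_step Q (F1 ++ C :: F2) (F1 ++ F2)
| step_QRATU F1 C F2 l : is_univ Q (lvar l) -> QRAT_lit Q (F1 ++ C :: F2) C l ->
    qrat_step Q (F1 ++ C :: F2) (F1 ++ [seq m <- C | m != l] :: F2)
| step_EUR F1 C F2 l : l \in C -> is_univ Q (lvar l) ->
    ~ in_EIC Q (F1 ++ C :: F2) C l (negl l) ->
    qrat_step Q (F1 ++ C :: F2) (F1 ++ [seq m <- C | m != l] :: F2).

Inductive qrat_derivation (Q : prefix) : cnf -> cnf -> nat -> Prop :=
| deriv_nil F : qrat_derivation Q F F 0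
| deriv_cons F F' F'' k : qrat_step Q F F' -> qrat_derivation Q F' F'' k ->
    qrat_derivation Q F F'' k.+1.

Definition qrat_refutation (Q : prefix) (F : cnf) (k : nat) : Prop :=
  exists F', qrat_derivation Q F F' k /\ [::] \in F'.

End QRAT.

Definition eqvar := (nat * nat * nat)%type.
Definition vx (i : nat) : eqvar := (0, i, 0).
Definition vy (j : nat) : eqvar := (1, j, 0).
Definition vu (i : nat) : eqvar := (2, i, 0).
Definition vv (j : nat) : eqvar := (3, j, 0).
Definition vt (i j : nat) : eqvar := (4, i, j).

Definition pos (v : eqvar) : lit eqvar := (v, true).
Definition ngt (v : eqvar) : lit eqvar := (v, false).

Definition idx (n : nat) : seq nat := iota 1 n.

Definition Q2 (n : nat) : prefix eqvar :=
  [:: (true, flatten [seq [:: vx i; vy i] | i <- idx n]);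
      (false, flatten [seq [:: vu i; vv i] | i <- idx n]);
      (true, [seq vt i j | i <- idx n, j <- idx n])].

Definition eq2_clauses (i j : nat) : cnf eqvar :=
  [:: [:: pos (vx i); pos (vy j); pos (vu i); pos (vv j); pos (vt i j)];
      [:: pos (vx i); ngt (vy j); pos (vu i); ngt (vv j); pos (vt i j)];
      [:: ngt (vx i); pos (vy j); ngt (vu i); pos (vv j); pos (vt i j)];
      [:: ngt (vx i); ngt (vy j); ngt (vu i); ngt (vv j); pos (vt i j)]].

Definition eq2 (n : nat) : cnf eqvar :=
  flatten [seq eq2_clauses i j | i <- idx n, j <- idx n] ++
  [:: [seq ngt (vt i j) | i <- idx n, j <- idx n]].

(* Main.v *)
Require Import Defs.
From mathcomp Require Import all_boot zify.
Set Implicit Arguments. Unset Strict Implicit. Unset Printing Implicit Defensive.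

Section Gen.
Variable V : eqType.

Lemma neglK (m : lit V) : negl (negl m) = m.
Proof. by case: m => a b; rewrite /negl /= negbK. Qed.

Lemma negl_neq (m : lit V) : (m == negl m) = false.
Proof. by case: m => a b; rewrite /negl /= xpair_eqE eqxx /=; case: b. Qed.

Lemma simplify_sub (F F' : cnf V) l : {subset F <= F'} -> {subset simplify F l <= simplify F' l}.
Proof.
move=> sub C /mapP [D]; rewrite mem_filter => /andP [nl DF] ->.
by apply: map_f; rewrite mem_filter nl sub.
Qed.

Lemma up_mono (F : cnf V) : up_conflict F -> forall F', {subset F <= F'} -> up_conflict F'.
Proof.
elim => {F} [F e | F l u _ IH] F' sub.
  by apply: up_empty; apply: sub.
apply: (up_unit (l := l)); first by apply: sub.
by apply: IH; apply: simplify_sub.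
Qed.

Lemma AT_mono (F F' : cnf V) C : AT F C -> {subset F <= F'} -> AT F' C.
Proof.
move=> h sub; apply: (up_mono h) => D; rewrite !mem_cat => /orP [->//|/sub ->]; by rewrite orbT.
Qed.

Lemma AT_taut (F : cnf V) C m : m \in C -> negl m \in C -> AT F C.
Proof.
move=> mC nC; apply: (up_unit (l := negl m)).
  by rewrite mem_cat; apply/orP; left; apply: (map_f (fun m => [:: negl m]) mC).
apply: up_empty; apply/mapP; exists [:: m].
  rewrite mem_filter mem_cat; apply/andP; split.
    by rewrite inE eq_sym negl_neq.
  apply/orP; left; have := map_f (fun m => [:: negl m]) nC; by rewrite /= neglK.
by rewrite /= neglK eqxx.
Qed.

Lemma deriv_cat Q (F F' F'' : cnf V) k k' :
  qrat_derivation Q F F' k -> qrat_derivation Q F' F'' k' -> qrat_derivation Q F F'' (k + k').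
Proof.
elim => {F F' k} [F|F F1 F2 k s _ IH] h //.
by rewrite addSn; apply: deriv_cons s (IH h).
Qed.

End Gen.

Lemma mem_pairs (f g : nat -> eqvar) s v :
  (v \in flatten [seq [:: f k; g k] | k <- s]) = has (fun k => (v == f k) || (v == g k)) s.
Proof. elim: s => //= k s IH. by rewrite !inE IH orbA. Qed.

Lemma lvl0 n t k : t <= 1 -> k \in idx n -> level (Q2 n) (t,k,0) = 0.
Proof.
move=> ht hk; rewrite /level /Q2 /= mem_pairs.
have -> : has (fun k0 => ((t, k, 0) == vx k0) || ((t, k, 0) == vy k0)) (idx n).
  apply/hasP; exists k => //; rewrite /vx /vy !xpair_eqE !eqxx !andbT.
  by case: t ht => [|[|]].
done.
Qed.

Lemma lvl1 n t k : 2 <= t <= 3 -> k \in idx n -> level (Q2 n) (t,k,0) = 1.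
Proof.
move=> ht hk; rewrite /level /Q2 /= !mem_pairs.
have -> : has (fun k0 => ((t, k, 0) == vx k0) || ((t, k, 0) == vy k0)) (idx n) = false.
  apply/negbTE/hasPn => i _; rewrite /vx /vy !xpair_eqE.
  by case: t ht => [|[|t]].
have -> : has (fun k0 => ((t, k, 0) == vu k0) || ((t, k, 0) == vv k0)) (idx n).
  apply/hasP; exists k => //; rewrite /vu /vv !xpair_eqE !eqxx !andbT.
  by case: t ht => [|[|[|[|]]]].
done.
Qed.

Definition isUV (m : lit eqvar) : bool := ((m.1.1.1 == 2) || (m.1.1.1 == 3)) && (m.1.2 == 0).
Definition partner (m : lit eqvar) : lit eqvar := ((m.1.1.1 - 2, m.1.1.2, m.1.2), m.2).
Definition Inv n (D : clause eqvar) := forall m, m \in D -> isUV m -> (m.1.1.2 \in idx n) /\ partner m \in D.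

Lemma isUV_negl m : isUV (negl m) = isUV m.
Proof. by []. Qed.
Lemma partner_negl m : partner (negl m) = negl (partner m).
Proof. by []. Qed.
Lemma partner_nUV m : isUV m -> isUV (partner m) = false.
Proof. by case: m => [[[t k] z] b]; rewrite /isUV /partner /=; case: t => [|[|[|[|t]]]]. Qed.
Lemma partner_neq m l : isUV m -> isUV l -> (partner m == l) = false.
Proof. move=> hm hl; apply/negbTE/eqP => e; by move: (partner_nUV hm); rewrite e hl. Qed.

Lemma Inv_filter n D (p : pred (lit eqvar)) : Inv n D -> (forall m, m \in D -> isUV m -> p (partner m)) -> Inv n (filter p D).
Proof.
move=> h hp m; rewrite mem_filter => /andP [pm mD] um.
have [k pD] := h m mD um; split => //; by rewrite mem_filter hp.
Qed.

Lemma qratu_step n F1 C F2 l : (forall D, D \in F1 ++ C :: F2 -> Inv n D) -> l \in C -> isUV l ->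
  qrat_step (Q2 n) (F1 ++ C :: F2) (F1 ++ [seq m <- C | m != l] :: F2).
Proof.
move=> hI lC ul.
have CF : C \in F1 ++ C :: F2 by rewrite mem_cat inE eqxx orbT.
have [kn pC] := hI C CF l lC ul.
move: kn pC ul; case: l lC => [[[t k] z] b] lC /= kn pC ul.
have /andP [ht /eqP ez] : ((t == 2) || (t == 3)) && (z == 0) := ul; subst z.
have ht' : 2 <= t <= 3 by case/orP: ht => /eqP ->.
apply: step_QRATU.
  by rewrite /is_univ /bound /lvar (lvl1 ht' kn).
split => // G HG HnG.
have [_ pG] := hI G HG _ HnG ul.
apply: (@AT_taut _ _ _ (partner ((t,k,0),b))).
  by rewrite /outer_resolvent mem_cat mem_filter pC partner_neq.
rewrite /outer_resolvent mem_cat; apply/orP; right; rewrite mem_filter -partner_negl pG andbT.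
have ht0 : t - 2 <= 1 by case/orP: ht => /eqP ->.
rewrite partner_neq //=.
by rewrite /leQ /bound /lvar (lvl0 ht0 kn) (lvl1 ht' kn).
Qed.

Definition rr (C : clause eqvar) := [seq m <- C | ~~ isUV m].

Lemma pass_clause n s : forall F1 C F2, size C <= s -> (forall D, D \in F1 ++ C :: F2 -> Inv n D) ->
  exists k, k <= size C /\ qrat_derivation (Q2 n) (F1 ++ C :: F2) (F1 ++ rr C :: F2) k.
Proof.
elim: s => [|s IH] F1 C F2 hs hI.
  case: C hs hI => // _ _; exists 0; split => //; exact: deriv_nil.
case: (boolP (has isUV C)) => [/hasP [l lC ul]|].
  pose C' := [seq m <- C | m != l].
  have st := qratu_step hI lC ul.
  have hI' : forall D, D \in F1 ++ C' :: F2 -> Inv n D.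
    move=> D; rewrite !mem_cat !inE => /orP [D1|/orP [/eqP ->|D2]].
    - by apply: hI; rewrite mem_cat D1.
    - apply: Inv_filter; first by apply: hI; rewrite mem_cat inE eqxx orbT.
      by move=> m _ um; rewrite partner_neq.
    - by apply: hI; rewrite mem_cat inE D2 !orbT.
  have szC : size C' < size C.
    rewrite size_filter -[X in _ < X](count_predC (fun m => m != l)).
    rewrite -addn1 leq_add2l -has_count; apply/hasP; exists l => //=; by rewrite negbK.
  have [k [hk d]] := IH F1 C' F2 (leq_trans (leq_trans szC hs) (leqnn _)) hI'.
  have eC : rr C' = rr C.
    rewrite /rr /C' -filter_predI; apply: eq_filter => m /=.
    by case: (boolP (isUV m)) => //= um; apply/negP => /eqP e; rewrite e ul in um.
  rewrite eC in d.
  exists k.+1; split; first by apply: leq_ltn_trans szC.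
  exact: deriv_cons st d.
move/hasPn => h.
have e : rr C = C by apply/all_filterP/allP => m /h.
exists 0; split => //; rewrite e; exact: deriv_nil.
Qed.

Lemma pass n F2 : forall F1, (forall D, D \in F1 ++ F2 -> Inv n D) ->
  exists k, k <= sumn (map size F2) /\ qrat_derivation (Q2 n) (F1 ++ F2) (F1 ++ map rr F2) k.
Proof.
elim: F2 => [|C F2 IH] F1 hI.
  by exists 0; split => //; apply: deriv_nil.
have [k1 [hk1 d1]] := pass_clause (leqnn (size C)) hI.
have hI' : forall D, D \in rcons F1 (rr C) ++ F2 -> Inv n D.
  move=> D; rewrite cat_rcons mem_cat !inE => /orP [D1|/orP [/eqP ->|D2]].
  - by apply: hI; rewrite mem_cat D1.
  - apply: Inv_filter; first by apply: hI; rewrite mem_cat inE eqxx orbT.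
    by move=> m _ um; rewrite partner_nUV.
  - by apply: hI; rewrite mem_cat inE D2 !orbT.
have [k2 [hk2 d2]] := IH _ hI'.
rewrite !cat_rcons in d2.
exists (k1 + k2); split; first by rewrite /= leq_add.
exact: deriv_cat d1 d2.
Qed.
Section UP.
Variable V : eqType.
Variables a b c : V.
Hypotheses (ab : a != b) (ac : a != c) (bc : b != c).
Ltac simp := rewrite /simplify /negl /= ?inE ?xpair_eqE ?eqxx /= ?(eq_sym c a) ?(eq_sym c b) ?(eq_sym b a) ?(negbTE ab) ?(negbTE ac) ?(negbTE bc) /= ?inE ?xpair_eqE ?eqxx /= ?(eq_sym c a) ?(eq_sym c b) ?(eq_sym b a) ?(negbTE ab) ?(negbTE ac) ?(negbTE bc) /=.
Ltac st l := apply: (up_unit (l := l)); [by simp | simp].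
Lemma up2 : up_conflict [:: [:: (c,false)]; [:: (a,true);(c,true)]; [:: (a,false);(c,true)]].
Proof.
st (c,false). st (a,true). apply: up_empty; by simp.
Qed.
Lemma up1 (pa : bool) : up_conflict [:: [:: (a,~~pa)]; [:: (c,false)]; [:: (a,pa);(b,true);(c,true)]; [:: (a,pa);(b,false);(c,true)]].
Proof.
case: pa.
- st (a,false). st (c,false). st (b,true). apply: up_empty; by simp.
- st (a,true). st (c,false). st (b,true). apply: up_empty; by simp.
Qed.
Lemma up_all s : forall (F : cnf V) B, size B <= s -> B \in F -> all (fun m => ~~ m.2) B ->
  (forall m, m \in B -> [:: negl m] \in F) -> up_conflict F.
Proof.
elim: s => [|s IH] F B hs BF hneg hu.
  by case: B hs BF hneg hu => // _ BF _ _; apply: up_empty.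
case: B hs BF hneg hu => [|m B'] hs BF hneg hu; first by apply: up_empty.
have mneg : ~~ m.2 by move: hneg => /= /andP [].
apply: (up_unit (l := negl m)); first by apply: hu; rewrite mem_head.
pose B'' := [seq m' <- m :: B' | m' != m].
have lnB : negl m \notin m :: B'.
  apply/negP => /(allP hneg); by rewrite /negl /= negbK (negbTE mneg).
apply: (IH _ B'').
- rewrite size_filter /= eqxx /=; apply: leq_trans (count_size _ _) _; by [].
- by apply/mapP; exists (m :: B'); [rewrite mem_filter lnB | rewrite neglK].
- by apply/allP => x; rewrite mem_filter => /andP [_ /(allP hneg)].
- move=> x; rewrite mem_filter => /andP [xm xB].
  apply/mapP; exists [:: negl x]; first rewrite mem_filter (hu _ xB) andbT.
    rewrite inE; apply/negP => /eqP /(congr1 (@negl _)); rewrite !neglK => e; by rewrite e eqxx in xm.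
  have xneg : ~~ x.2 by apply: (allP hneg).
  rewrite /= neglK; case: eqP => //= e.
  by move: xneg mneg; rewrite -e; case: x {xm xB e} => ? [] ...
Qed.
End UP.

Definition Bcl n : clause eqvar := [seq ngt (vt i j) | i <- idx n, j <- idx n].

Lemma mem_eq2 n D : D \in eq2 n ->
  (exists i j, [/\ i \in idx n, j \in idx n & D \in eq2_clauses i j]) \/ D = Bcl n.
Proof.
rewrite /eq2 mem_cat inE => /orP [/flattenP [cs /allpairsP [[i j] [/= hi hj ->]] hD]|/eqP ->].
  by left; exists i, j.
by right.
Qed.

Lemma Inv_eq2 n D : D \in eq2 n -> Inv n D.
Proof.
case/mem_eq2 => [[i [j [hi hj hD]]]|->]; last first.
  by move=> m /allpairsP [[i j] [_ _ ->]].
move: hD; rewrite !inE => /or4P [] /eqP -> m; rewrite !inE => h;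
repeat (case/orP: h => [/eqP -> | h]); try (move/eqP: h => ->); move=> //= _.
all: split => //. all: rewrite ?inE. all: try (apply/orP; left). all: by apply/eqP.
Qed.

Lemma sz_flat (L : seq (cnf eqvar)) : (forall cs, cs \in L -> sumn (map size cs) = 20) ->
  sumn (map size (flatten L)) = 20 * size L.
Proof.
elim: L => [|cs L IH] h //=.
rewrite map_cat sumn_cat h ?mem_head // IH ?mulnS // => cs' H; apply: h; by rewrite inE H orbT.
Qed.

Lemma sz_eq2 n : sumn (map size (eq2 n)) = 21 * (n * n).
Proof.
rewrite /eq2 map_cat sumn_cat sz_flat.
  by rewrite /= !size_allpairs /idx size_iota addn0 mulSn addnC.
by move=> cs /allpairsP [[i j] [_ _ ->]].
Qed.

Definition F0 n := map rr (eq2 n).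

Lemma K_in n i j C : i \in idx n -> j \in idx n -> C \in eq2_clauses i j -> rr C \in F0 n.
Proof.
move=> hi hj hC; apply: map_f; rewrite /eq2 mem_cat; apply/orP; left.
apply/flattenP; exists (eq2_clauses i j) => //; exact: (allpairs_f eq2_clauses hi hj).
Qed.

Lemma dxy i j : vx i != vy j. Proof. by []. Qed.
Lemma dxt i j : vx i != vt i j. Proof. by []. Qed.
Lemma dyt i j : vy j != vt i j. Proof. by []. Qed.

Lemma block n i j F : i \in idx n -> j \in idx n -> {subset F0 n <= F} ->
  qrat_derivation (Q2 n) F ([:: pos (vt i j)] :: [:: ngt (vx i); pos (vt i j)] :: [:: pos (vx i); pos (vt i j)] :: F) 3.
Proof.
move=> hi hj sub.
have K := fun C (h : C \in eq2_clauses i j) => sub _ (K_in hi hj h).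
have K1 : [:: pos (vx i); pos (vy j); pos (vt i j)] \in F by apply: (K (nth [::] (eq2_clauses i j) 0)); rewrite mem_nth.
have K2 : [:: pos (vx i); ngt (vy j); pos (vt i j)] \in F by apply: (K (nth [::] (eq2_clauses i j) 1)); rewrite mem_nth.
have K3 : [:: ngt (vx i); pos (vy j); pos (vt i j)] \in F by apply: (K (nth [::] (eq2_clauses i j) 2)); rewrite mem_nth.
have K4 : [:: ngt (vx i); ngt (vy j); pos (vt i j)] \in F by apply: (K (nth [::] (eq2_clauses i j) 3)); rewrite mem_nth.
apply: (@deriv_cons _ _ _ ([:: pos (vx i); pos (vt i j)] :: F)); first apply: step_ATA.
  apply: (up_mono (up1 (dxy i j) (dxt i j) (dyt i j) true)) => D.
  rewrite !inE => /or4P [] /eqP -> /=; by rewrite ?inE ?eqxx ?K1 ?K2 ?orbT.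
apply: (@deriv_cons _ _ _ ([:: ngt (vx i); pos (vt i j)] :: [:: pos (vx i); pos (vt i j)] :: F)); first apply: step_ATA.
  apply: (up_mono (up1 (dxy i j) (dxt i j) (dyt i j) false)) => D.
  rewrite !inE => /or4P [] /eqP -> /=; by rewrite ?inE ?eqxx ?K3 ?K4 ?orbT.
apply: (@deriv_cons _ _ _ ([:: pos (vt i j)] :: [:: ngt (vx i); pos (vt i j)] :: [:: pos (vx i); pos (vt i j)] :: F)); first apply: step_ATA.
  apply: (up_mono (up2 (dxt i j))) => D.
  rewrite !inE => /or3P [] /eqP -> /=; by rewrite ?inE ?eqxx ?orbT.
exact: deriv_nil.
Qed.

Lemma units n ps : (forall p, p \in ps -> p.1 \in idx n /\ p.2 \in idx n) ->
  forall F, {subset F0 n <= F} -> exists F', [/\ qrat_derivation (Q2 n) F F' (3 * size ps),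
    {subset F <= F'} & forall p, p \in ps -> [:: pos (vt p.1 p.2)] \in F'].
Proof.
elim: ps => [|p ps IH] hp F sub.
  by exists F; split => //; apply: deriv_nil.
have [hi hj] := hp p (mem_head _ _).
have d1 := block hi hj sub.
set F1 := (X in qrat_derivation _ _ X _) in d1.
have sub1 : {subset F <= F1} by move=> D hD; rewrite /F1 !inE hD !orbT.
have hp' : forall q, q \in ps -> q.1 \in idx n /\ q.2 \in idx n.
  by move=> q hq; apply: hp; rewrite inE hq orbT.
have sub' : {subset F0 n <= F1} by move=> D /sub /sub1.
have [F' [d2 s2 u2]] := IH hp' F1 sub'.
exists F'; split.
- by rewrite mulnS; apply: deriv_cat d1 d2.
- by move=> D /sub1 /s2.
- move=> q; rewrite inE => /orP [/eqP ->|/u2 //]; apply: s2; by rewrite /F1 inE eqxx.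
Qed.

Theorem theorem8 :
  exists (c n0 : nat), forall n : nat, n0 <= n ->
    exists k : nat, k <= c * n ^ 2 /\ qrat_refutation (Q2 n) (eq2 n) k.
Proof.
exists 25, 1 => n hn.
have [k1 [hk1 d1]] := @pass n (eq2 n) [::] (fun D => @Inv_eq2 n D).
rewrite sz_eq2 in hk1.
set ps := [seq (i, j) | i <- idx n, j <- idx n].
have hps : forall p, p \in ps -> p.1 \in idx n /\ p.2 \in idx n.
  by move=> p /allpairsP [[i j] [/= hi hj ->]].
have [F' [d2 s2 u2]] := units hps (fun D (h : D \in F0 n) => h).
have BF : Bcl n \in F'.
  apply: s2; apply/mapP; exists (Bcl n); first by rewrite /eq2 mem_cat inE eqxx orbT.
  by apply/esym/all_filterP/allP => m /allpairsP [[i j] [_ _ ->]].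
have d3 : qrat_derivation (Q2 n) F' ([::] :: F') 1.
  apply: deriv_cons; last exact: deriv_nil.
  apply: step_ATA; rewrite /AT /=.
  apply: (up_all (leqnn _) BF).
    by apply/allP => m /allpairsP [[i j] [_ _ ->]].
  move=> m /allpairsP [[i j] [hi hj ->]].
  have := u2 (i, j) (allpairs_f pair hi hj); by [].
exists (k1 + 3 * size ps + 1); split.
  rewrite size_allpairs /idx size_iota.
  have : 1 <= n * n by rewrite muln_gt0 hn.
  move: hk1; rewrite expnS expn1; set N := n * n => h1 h2.
  apply: (@leq_trans (21 * N + 3 * N + N)).
    by rewrite leq_add // leq_add2r.
  lia.
rewrite /qrat_refutation; exists ([::] :: F'); split; last by rewrite mem_head.
apply: deriv_cat d3; apply: deriv_cat d1 d2.
Qed.
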